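(* Let $A$ be an associative unital algebra and $(H,\pi_l,\pi_r,\psi_l,\psi_r)$ an L-R-twisting datum for $A$. Then $(H,\pi_r,\psi_r)$ is a right twisting datum for the left twisted algebra $(A,\star)$ and the corresponding right twisted product on $(A,\star)$ equals the L-R-twisted product $\bullet$; likewise $(H,\pi_l,\psi_l)$ is a left twisting datum for the right twisted algebra $(A,\diamond)$ and the corresponding left twisted product on $(A,\diamond)$ equals $\bullet$.
   Context: Work over a field $k$; $H$ an ordinary bialgebra, $\Delta(h)=h_1\otimes h_2$. An L-R-twisting datum for an algebra $A$: $H$-bimodule algebra structure on $A$ (actions $h\cdot a$, $a\cdot h$, with $h\cdot(ab)=(h_1\cdot a)(h_2\cdot b)$, $(ab)\cdot h=(a\cdot h_1)(b\cdot h_2)$, $h\cdot1=1\cdot h=\varepsilon(h)1$), $H$-bicomodule algebra structure on $A$ (algebra maps $\psi_l(a)=a_{[-1]}\otimes a_{[0]}$, $\psi_r(a)=a_{<0>}\otimes a_{<1>}$ forming an $H$-bicomodule), and compatibilities $(h\cdot a)_{[-1]}\otimes(h\cdot a)_{[0]}=a_{[-1]}\otimes h\cdot a_{[0]}$, $(h\cdot a)_{<0>}\otimes(h\cdot a)_{<1>}=h\cdot a_{<0>}\otimes a_{<1>}$, $(a\cdot h)_{[-1]}\otimes(a\cdot h)_{[0]}=a_{[-1]}\otimes a_{[0]}\cdot h$, $(a\cdot h)_{<0>}\otimes(a\cdot h)_{<1>}=a_{<0>}\cdot h\otimes a_{<1>}$. The L-R-twisted product is $a\bullet b=(a_{[0]}\cdot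 b_{<1>})(a_{[-1]}\cdot b_{<0>})$. A left twisting datum $(H,\pi,\psi)$ for an algebra $A$: $A$ is a left $H$-module algebra ($h\cdot a$) and left $H$-comodule algebra ($a\mapsto a_{(-1)}\otimes a_{(0)}$) with $(h\cdot a)_{(-1)}\otimes(h\cdot a)_{(0)}=a_{(-1)}\otimes h\cdot a_{(0)}$; the left twisted product is $a\star b=a_{(0)}(a_{(-1)}\cdot b)$. A right twisting datum $(H,\pi_r,\psi_r)$: $A$ a right $H$-module algebra ($a\cdot h$) and right $H$-comodule algebra ($a\mapsto a_{<0>}\otimes a_{<1>}$) with $(a\cdot h)_{<0>}\otimes(a\cdot h)_{<1>}=a_{<0>}\cdot h\otimes a_{<1>}$; the right twisted product is $a\diamond b=(a\cdot b_{<1>})b_{<0>}$. In the statement, $\star$ is computed from $(H,\pi_l,\psi_l)$ and $\diamond$ from $(H,\pi_r,\psi_r)$. *)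

(* Defs.v *)
(* Elements of tensor products U (x) V are represented by finite lists
   of pairs (Sweedler-style sums), and equality of tensors is equality in the
   tensor product, expressed through its universal property (all bilinear /
   trilinear maps into an arbitrary k-module agree). *)
From HB Require Import structures.
From mathcomp Require Import all_boot all_algebra.
Set Implicit Arguments. Unset Strict Implicit. Unset Printing Implicit Defensive.
Import GRing.Theory.
Local Open Scope ring_scope.

Section Twisting.
Variable k : fieldType.

Definition bilinear2 (U V M : lmodType k) (f : U -> V -> M) : Prop :=
  (forall (c : k) x x' y, f (c *: x + x') y = c *: f x y + f x' y) /\
  (forall (c : k) x y y', f x (c *: y + y') = c *: f x y + f x y').

Definition trilinear3 (U V W M : lmodType k) (f : U -> V -> W -> M) : Prop :=
  (forall (c : k) x x' y z, f (c *: x + x') y z = c *: f x y z + f x' y z) /\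
  (forall (c : k) x y y' z, f x (c *: y + y') z = c *: f x y z + f x y' z) /\
  (forall (c : k) x y z z', f x y (c *: z + z') = c *: f x y z + f x y z').

Definition teq2 (U V : lmodType k) (s t : seq (U * V)) : Prop :=
  forall (M : lmodType k) (f : U -> V -> M), bilinear2 f ->
    \sum_(p <- s) f p.1 p.2 = \sum_(p <- t) f p.1 p.2.

Definition teq3 (U V W : lmodType k) (s t : seq (U * V * W)) : Prop :=
  forall (M : lmodType k) (f : U -> V -> W -> M), trilinear3 f ->
    \sum_(p <- s) f p.1.1 p.1.2 p.2 = \sum_(p <- t) f p.1.1 p.1.2 p.2.

Definition tscl2 (U V : lmodType k) (c : k) (s : seq (U * V)) : seq (U * V) :=
  [seq (c *: p.1, p.2) | p <- s].

Definition is_bialgebra (H : algType k) (Delta : H -> seq (H * H)) (eps : H -> k)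
  : Prop :=
  (forall (c : k) g h, teq2 (Delta (c *: g + h)) (tscl2 c (Delta g) ++ Delta h)) /\
  (forall h, teq3 [seq (q.1, q.2, p.2) | p <- Delta h, q <- Delta p.1]
                  [seq (p.1, q.1, q.2) | p <- Delta h, q <- Delta p.2]) /\
  (forall (c : k) g h, eps (c *: g + h) = c * eps g + eps h) /\
  (forall h, \sum_(p <- Delta h) eps p.1 *: p.2 = h) /\
  (forall h, \sum_(p <- Delta h) eps p.2 *: p.1 = h) /\
  (forall g h, teq2 (Delta (g * h))
                    [seq (p.1 * q.1, p.2 * q.2) | p <- Delta g, q <- Delta h]) /\
  teq2 (Delta 1) [:: (1, 1)] /\
  (forall g h, eps (g * h) = eps g * eps h) /\
  eps 1 = 1.

Section OverH.
Variables (H : algType k) (Delta : H -> seq (H * H)) (eps : H -> k).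
Variables (A : lmodType k).

Definition is_alg (mul : A -> A -> A) (one : A) : Prop :=
  bilinear2 mul /\ associative mul /\ left_id one mul /\ right_id one mul.

Definition lmod_alg (mul : A -> A -> A) (one : A) (act : H -> A -> A) : Prop :=
  bilinear2 act /\
  (forall g h a, act (g * h) a = act g (act h a)) /\
  (forall a, act 1 a = a) /\
  (forall h a b, act h (mul a b) = \sum_(p <- Delta h) mul (act p.1 a) (act p.2 b)) /\
  (forall h, act h one = eps h *: one).

Definition rmod_alg (mul : A -> A -> A) (one : A) (act : A -> H -> A) : Prop :=
  bilinear2 act /\
  (forall g h a, act a (g * h) = act (act a g) h) /\
  (forall a, act a 1 = a) /\
  (forall h a b, act (mul a b) h = \sum_(p <- Delta h) mul (act a p.1) (act b p.2)) /\
  (forall h, act one h = eps h *: one).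

(* left H-comodule algebra: psi a = sum a_[-1] (x) a_[0] *)
Definition lcomod_alg (mul : A -> A -> A) (one : A) (psi : A -> seq (H * A)) : Prop :=
  (forall (c : k) a b, teq2 (psi (c *: a + b)) (tscl2 c (psi a) ++ psi b)) /\
  (forall a, teq3 [seq (q.1, q.2, p.2) | p <- psi a, q <- Delta p.1]
                  [seq (p.1, q.1, q.2) | p <- psi a, q <- psi p.2]) /\
  (forall a, \sum_(p <- psi a) eps p.1 *: p.2 = a) /\
  (forall a b, teq2 (psi (mul a b))
                    [seq (p.1 * q.1, mul p.2 q.2) | p <- psi a, q <- psi b]) /\
  teq2 (psi one) [:: (1, one)].

(* right H-comodule algebra: psi a = sum a_<0> (x) a_<1> *)
Definition rcomod_alg (mul : A -> A -> A) (one : A) (psi : A -> seq (A * H)) : Prop :=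
  (forall (c : k) a b, teq2 (psi (c *: a + b)) (tscl2 c (psi a) ++ psi b)) /\
  (forall a, teq3 [seq (q.1, q.2, p.2) | p <- psi a, q <- psi p.1]
                  [seq (p.1, q.1, q.2) | p <- psi a, q <- Delta p.2]) /\
  (forall a, \sum_(p <- psi a) eps p.2 *: p.1 = a) /\
  (forall a b, teq2 (psi (mul a b))
                    [seq (mul p.1 q.1, p.2 * q.2) | p <- psi a, q <- psi b]) /\
  teq2 (psi one) [:: (one, 1)].

Definition left_twisting_datum (mul : A -> A -> A) (one : A)
    (act : H -> A -> A) (psi : A -> seq (H * A)) : Prop :=
  is_alg mul one /\ lmod_alg mul one act /\ lcomod_alg mul one psi /\
  (forall h a, teq2 (psi (act h a)) [seq (p.1, act h p.2) | p <- psi a]).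

Definition right_twisting_datum (mul : A -> A -> A) (one : A)
    (act : A -> H -> A) (psi : A -> seq (A * H)) : Prop :=
  is_alg mul one /\ rmod_alg mul one act /\ rcomod_alg mul one psi /\
  (forall h a, teq2 (psi (act a h)) [seq (act p.1 h, p.2) | p <- psi a]).

Definition LR_twisting_datum (mul : A -> A -> A) (one : A)
    (lact : H -> A -> A) (ract : A -> H -> A)
    (psil : A -> seq (H * A)) (psir : A -> seq (A * H)) : Prop :=
  is_alg mul one /\
  lmod_alg mul one lact /\ rmod_alg mul one ract /\
  (forall h g a, ract (lact h a) g = lact h (ract a g)) /\
  lcomod_alg mul one psil /\ rcomod_alg mul one psir /\
  (forall a, teq3 [seq (q.1, q.2, p.2) | p <- psir a, q <- psil p.1]
                  [seq (p.1, q.1, q.2) | p <- psil a, q <- psir p.2]) /\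
  (forall h a, teq2 (psil (lact h a)) [seq (p.1, lact h p.2) | p <- psil a]) /\
  (forall h a, teq2 (psir (lact h a)) [seq (lact h p.1, p.2) | p <- psir a]) /\
  (forall h a, teq2 (psil (ract a h)) [seq (p.1, ract p.2 h) | p <- psil a]) /\
  (forall h a, teq2 (psir (ract a h)) [seq (ract p.1 h, p.2) | p <- psir a]).

Definition ltw_prod (mul : A -> A -> A) (act : H -> A -> A)
    (psi : A -> seq (H * A)) (a b : A) : A :=
  \sum_(p <- psi a) mul p.2 (act p.1 b).

Definition rtw_prod (mul : A -> A -> A) (act : A -> H -> A)
    (psi : A -> seq (A * H)) (a b : A) : A :=
  \sum_(p <- psi b) mul (act a p.2) p.1.

Definition lrtw_prod (mul : A -> A -> A) (lact : H -> A -> A) (ract : A -> H -> A)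
    (psil : A -> seq (H * A)) (psir : A -> seq (A * H)) (a b : A) : A :=
  \sum_(p <- psil a) \sum_(q <- psir b) mul (ract p.2 q.2) (lact p.1 q.1).

End OverH.
End Twisting.

(* Main.v *)
Require Import Defs.
From HB Require Import structures.
From mathcomp Require Import all_boot all_algebra.
Set Implicit Arguments. Unset Strict Implicit. Unset Printing Implicit Defensive.
Import GRing.Theory.
Local Open Scope ring_scope.

Local Open Scope ring_scope.
Section Infra.
Variable k : fieldType.

Definition lin (U M : lmodType k) (f : U -> M) :=
  forall (c : k) x y, f (c *: x + y) = c *: f x + f y.

Lemma lin0 (U M : lmodType k) (f : U -> M) : lin f -> f 0 = 0.
Proof.
move=> h; have e := h 1 0 0; rewrite !scale1r addr0 in e.
by apply: (@addIr _ (f 0)); rewrite add0r -e.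
Qed.

Lemma linD (U M : lmodType k) (f : U -> M) x y : lin f -> f (x + y) = f x + f y.
Proof. by move=> h; have := h 1 x y; rewrite !scale1r. Qed.

Lemma linZ (U M : lmodType k) (f : U -> M) c x : lin f -> f (c *: x) = c *: f x.
Proof. by move=> h; rewrite -[c *: x]addr0 h lin0 // addr0. Qed.

Lemma lin_sum (U M : lmodType k) (f : U -> M) (I : Type) (s : seq I) (F : I -> U) :
  lin f -> f (\sum_(i <- s) F i) = \sum_(i <- s) f (F i).
Proof.
move=> h; elim: s => [|x s IH]; first by rewrite !big_nil lin0.
by rewrite !big_cons linD // IH.
Qed.

Lemma lin_sumf (U M : lmodType k) (I : Type) (s : seq I) (F : I -> U -> M) :
  (forall i, lin (F i)) -> lin (fun x => \sum_(i <- s) F i x).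
Proof.
move=> h c x y; rewrite scaler_sumr -big_split; apply: eq_bigr => i _; exact: h.
Qed.

Lemma lin_comp (U V M : lmodType k) (g : V -> M) (f : U -> V) :
  lin g -> lin f -> lin (fun x => g (f x)).
Proof. by move=> hg hf c x y; rewrite hf hg. Qed.

Lemma lin_id (U : lmodType k) : lin (fun x : U => x).
Proof. by []. Qed.

Lemma bil_intro (U V M : lmodType k) (f : U -> V -> M) :
  (forall y, lin (fun x => f x y)) -> (forall x, lin (f x)) -> bilinear2 f.
Proof. by move=> h1 h2; split=> c *; [apply: h1|apply: h2]. Qed.

Lemma bilL (U V M : lmodType k) (f : U -> V -> M) y : bilinear2 f -> lin (fun x => f x y).
Proof. by case=> h _ c x x'; apply: h. Qed.
Lemma bilR (U V M : lmodType k) (f : U -> V -> M) x : bilinear2 f -> lin (f x).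
Proof. by case=> _ h c y y'; apply: h. Qed.

Lemma tril_intro (U V W M : lmodType k) (f : U -> V -> W -> M) :
  (forall y z, lin (fun x => f x y z)) -> (forall x z, lin (fun y => f x y z)) ->
  (forall x y, lin (f x y)) -> trilinear3 f.
Proof. by move=> h1 h2 h3; split; [|split] => c *; [apply: h1|apply: h2|apply: h3]. Qed.

Lemma teq_lin (X U V M : lmodType k) (psi : X -> seq (U * V)) (f : U -> V -> M) :
  (forall (c : k) a b, teq2 (psi (c *: a + b)) (tscl2 c (psi a) ++ psi b)) ->
  bilinear2 f -> lin (fun a => \sum_(p <- psi a) f p.1 p.2).
Proof.
move=> hp hf c a b; rewrite hp // big_cat big_map /= scaler_sumr; congr (_ + _).
by apply: eq_bigr => p _; rewrite (linZ _ _ (bilL _ hf)).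
Qed.

Lemma mulHL (H : algType k) (h : H) : lin (fun g : H => g * h).
Proof. by move=> c x y; rewrite mulrDl scalerAl. Qed.
Lemma mulHR (H : algType k) (h : H) : lin (fun g : H => h * g).
Proof. by move=> c x y; rewrite mulrDr scalerAr. Qed.

End Infra.
Section Main.
Variables (k : fieldType) (H : algType k) (Delta : H -> seq (H * H)) (eps : H -> k)
  (A : lmodType k) (mul : A -> A -> A) (one : A)
  (lact : H -> A -> A) (ract : A -> H -> A)
  (psil : A -> seq (H * A)) (psir : A -> seq (A * H)).

Hypotheses (mulB : bilinear2 mul) (mulA : associative mul)
  (mul1l : left_id one mul) (mul1r : right_id one mul).
Hypotheses (lB : bilinear2 lact) (lM : forall g h a, lact (g * h) a = lact g (lact h a))
  (l1 : forall a, lact 1 a = a)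
  (lD : forall h a b, lact h (mul a b) = \sum_(p <- Delta h) mul (lact p.1 a) (lact p.2 b))
  (lone : forall h, lact h one = eps h *: one).
Hypotheses (rB : bilinear2 ract) (rM : forall g h a, ract a (g * h) = ract (ract a g) h)
  (r1 : forall a, ract a 1 = a)
  (rD : forall h a b, ract (mul a b) h = \sum_(p <- Delta h) mul (ract a p.1) (ract b p.2))
  (rone : forall h, ract one h = eps h *: one).
Hypothesis lr : forall h g a, ract (lact h a) g = lact h (ract a g).
Hypotheses (plL : forall (c : k) a b, teq2 (psil (c *: a + b)) (tscl2 c (psil a) ++ psil b))
  (plC : forall a, teq3 [seq (q.1, q.2, p.2) | p <- psil a, q <- Delta p.1]
                  [seq (p.1, q.1, q.2) | p <- psil a, q <- psil p.2])
  (plE : forall a, \sum_(p <- psil a) eps p.1 *: p.2 = a)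
  (plM : forall a b, teq2 (psil (mul a b))
                    [seq (p.1 * q.1, mul p.2 q.2) | p <- psil a, q <- psil b])
  (pl1 : teq2 (psil one) [:: (1, one)]).
Hypotheses (prL : forall (c : k) a b, teq2 (psir (c *: a + b)) (tscl2 c (psir a) ++ psir b))
  (prC : forall a, teq3 [seq (q.1, q.2, p.2) | p <- psir a, q <- psir p.1]
                  [seq (p.1, q.1, q.2) | p <- psir a, q <- Delta p.2])
  (prE : forall a, \sum_(p <- psir a) eps p.2 *: p.1 = a)
  (prM : forall a b, teq2 (psir (mul a b))
                    [seq (mul p.1 q.1, p.2 * q.2) | p <- psir a, q <- psir b])
  (pr1 : teq2 (psir one) [:: (one, 1)]).
Hypothesis bic : forall a, teq3 [seq (q.1, q.2, p.2) | p <- psir a, q <- psil p.1]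
                  [seq (p.1, q.1, q.2) | p <- psil a, q <- psir p.2].
Hypotheses
  (cll : forall h a, teq2 (psil (lact h a)) [seq (p.1, lact h p.2) | p <- psil a])
  (crl : forall h a, teq2 (psir (lact h a)) [seq (lact h p.1, p.2) | p <- psir a])
  (clr : forall h a, teq2 (psil (ract a h)) [seq (p.1, ract p.2 h) | p <- psil a])
  (crr : forall h a, teq2 (psir (ract a h)) [seq (ract p.1 h, p.2) | p <- psir a]).

Let mL y : lin (mul^~ y). Proof. exact: bilL. Qed.
Let mR x : lin (mul x). Proof. exact: bilR. Qed.
Let lL y : lin (lact^~ y). Proof. exact: bilL. Qed.
Let lR x : lin (lact x). Proof. exact: bilR. Qed.
Let rL y : lin (ract^~ y). Proof. exact: bilL. Qed.
Let rR x : lin (ract x). Proof. exact: bilR. Qed.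

Definition star a b := \sum_(p <- psil a) mul p.2 (lact p.1 b).
Definition dia a b := \sum_(p <- psir b) mul (ract a p.2) p.1.

Lemma starB : bilinear2 star.
Proof.
apply: bil_intro => [y|x].
  apply: (teq_lin (f := fun h x => mul x (lact h y)) plL); apply: bil_intro => [v|u].
    exact: (lin_comp (mR v) (lL y)).
  exact: mL.
by apply: lin_sumf => p; exact: (lin_comp (mR p.2) (lR p.1)).
Qed.


Lemma star_sumL (I : Type) (s : seq I) (F : I -> A) c :
  star (\sum_(i <- s) F i) c = \sum_(i <- s) star (F i) c.
Proof. exact: (lin_sum _ _ (bilL c starB)). Qed.

Lemma star_mul u v c : star (mul u v) c =
  \sum_(x <- psil u) \sum_(y <- psil v) mul (mul x.2 y.2) (lact (x.1 * y.1) c).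
Proof.
rewrite /star (plM u v (f := fun h x => mul x (lact h c))) ?big_allpairs_dep //.
apply: bil_intro => [v'|u']; first exact: (lin_comp (mR v') (lL c)).
exact: mL.
Qed.

Lemma star_assoc : associative star.
Proof.
move=> a b c.
pose T h g m := \sum_(y <- psil b) mul (mul m (lact h y.2)) (lact (g * y.1) c).
have TT : trilinear3 T.
  apply: tril_intro => [g m|h m|h g].
  - apply: lin_sumf => y; exact: (lin_comp (mL _) (lin_comp (mR m) (lL y.2))).
  - apply: lin_sumf => y.
    exact: (lin_comp (mR _) (lin_comp (lL c) (mulHL y.1))).
  - apply: lin_sumf => y; exact: (lin_comp (mL _) (mL _)).
have := plC a TT; rewrite !big_allpairs_dep /= => eT.
transitivity (\sum_(p <- psil a) \sum_(q <- Delta p.1) T q.1 q.2 p.2).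
  rewrite /star; apply: eq_bigr => p _.
  rewrite (lin_sum _ _ (lR p.1)) /=.
  under eq_bigr do rewrite lD.
  rewrite (lin_sum _ _ (mR p.2)) exchange_big /=; apply: eq_bigr => d _.
  rewrite /T (lin_sum _ _ (mR p.2)); apply: eq_bigr => y _.
  by rewrite mulA lM.
rewrite eT [star a b]/star star_sumL; apply: eq_bigr => p _.
rewrite star_mul; apply: eq_bigr => x _.
pose G h m := mul (mul x.2 m) (lact (x.1 * h) c).
have GB : bilinear2 G.
  apply: bil_intro => [m|h].
    exact: (lin_comp (mR _) (lin_comp (lL c) (mulHR x.1))).
  exact: (lin_comp (mL _) (mR x.2)).
by rewrite (cll p.1 b GB) big_map.
Qed.

Lemma starF b : bilinear2 (fun h x => mul x (lact h b)).
Proof.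
apply: bil_intro => [v'|u']; first exact: (lin_comp (mR v') (lL b)).
exact: mL.
Qed.

Lemma star1l : left_id one star.
Proof. by move=> b; rewrite /star (pl1 (starF b)) big_seq1 /= l1 mul1l. Qed.

Lemma star1r : right_id one star.
Proof.
move=> a; rewrite /star -{2}(plE a); apply: eq_bigr => p _.
by rewrite lone (linZ _ _ (mR _)) mul1r.
Qed.

Lemma star_rD h a b :
  ract (star a b) h = \sum_(d <- Delta h) star (ract a d.1) (ract b d.2).
Proof.
rewrite /star (lin_sum _ _ (rL h)).
under eq_bigr do rewrite rD.
rewrite exchange_big /=; apply: eq_bigr => d _.
rewrite (clr d.1 a (starF (ract b d.2))) big_map; apply: eq_bigr => p _ /=.
by rewrite lr.
Qed.

Lemma star_prM a b : teq2 (psir (star a b))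
  [seq (star p.1 q.1, p.2 * q.2) | p <- psir a, q <- psir b].
Proof.
move=> M f fB; rewrite big_allpairs_dep /=.
have PhiL := teq_lin prL fB.
have := lin_sum (psil a) (fun p => mul p.2 (lact p.1 b)) PhiL.
rewrite /= => ->.
pose T h m g := \sum_(y <- psir b) f (mul m (lact h y.1)) (g * y.2).
have TT : trilinear3 T.
  apply: tril_intro => [m g|h g|h m].
  - apply: lin_sumf => y.
    exact: (lin_comp (bilL _ fB) (lin_comp (mR m) (lL y.1))).
  - apply: lin_sumf => y.
    exact: (lin_comp (bilL _ fB) (mL _)).
  - apply: lin_sumf => y.
    exact: (lin_comp (bilR _ fB) (mulHL y.2)).
have := bic a TT; rewrite !big_allpairs_dep /= => eT.
transitivity (\sum_(p <- psil a) \sum_(q <- psir p.2) T p.1 q.1 q.2).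
  apply: eq_bigr => p _.
  rewrite (prM p.2 (lact p.1 b) fB) big_allpairs_dep /=; apply: eq_bigr => x _.
  have GB : bilinear2 (fun u g => f (mul x.1 u) (x.2 * g)).
    apply: bil_intro => [g|u].
      exact: (lin_comp (bilL _ fB) (mR x.1)).
    exact: (lin_comp (bilR _ fB) (mulHR x.2)).
  by rewrite (crl p.1 b GB) big_map.
rewrite -eT; apply: eq_bigr => x _; symmetry.
under eq_bigr => y _ do rewrite /star (lin_sum _ _ (bilL _ fB)).
by rewrite exchange_big.
Qed.

Lemma star_rtw a b : rtw_prod star ract psir a b = lrtw_prod mul lact ract psil psir a b.
Proof.
rewrite /rtw_prod /lrtw_prod exchange_big /=; apply: eq_bigr => q _.
by rewrite /star (clr q.2 a (starF q.1)) big_map.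
Qed.

Lemma diaF a : bilinear2 (fun x g => mul (ract a g) x).
Proof.
apply: bil_intro => [g|x]; first exact: mR.
exact: (lin_comp (mL x) (rR a)).
Qed.

Lemma diaB : bilinear2 dia.
Proof.
apply: bil_intro => [y|x].
  by apply: lin_sumf => q; exact: (lin_comp (mL q.1) (rL q.2)).
exact: (teq_lin (f := fun x g => mul (ract _ g) x) prL (diaF x)).
Qed.

Lemma dia_sumR (I : Type) (s : seq I) (F : I -> A) a :
  dia a (\sum_(i <- s) F i) = \sum_(i <- s) dia a (F i).
Proof. exact: (lin_sum _ _ (bilR a diaB)). Qed.

Lemma dia_mul a u v : dia a (mul u v) =
  \sum_(x <- psir u) \sum_(y <- psir v) mul (ract a (x.2 * y.2)) (mul x.1 y.1).
Proof. by rewrite /dia (prM u v (diaF a)) big_allpairs_dep. Qed.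

Lemma dia_assoc : associative dia.
Proof.
move=> a b c.
pose T m g h := \sum_(x <- psir b) mul (ract a (x.2 * g)) (mul (ract x.1 h) m).
have TT : trilinear3 T.
  apply: tril_intro => [g h|m h|m g].
  - apply: lin_sumf => x; exact: (lin_comp (mR _) (mR _)).
  - apply: lin_sumf => x.
    exact: (lin_comp (mL _) (lin_comp (rR a) (mulHR x.2))).
  - apply: lin_sumf => x; exact: (lin_comp (mR _) (lin_comp (mL m) (rR x.1))).
have := prC c TT; rewrite !big_allpairs_dep /= => eT.
transitivity (\sum_(q <- psir c) \sum_(y <- psir q.1) T y.1 y.2 q.2).
  rewrite [dia b c]/dia dia_sumR; apply: eq_bigr => q _.
  rewrite dia_mul.
  pose G m g := \sum_(y <- psir q.1) mul (ract a (g * y.2)) (mul m y.1).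
  have GB : bilinear2 G.
    apply: bil_intro => [g|m].
      apply: lin_sumf => y; exact: (lin_comp (mR _) (mL _)).
    apply: lin_sumf => y; exact: (lin_comp (mL _) (lin_comp (rR a) (mulHL y.2))).
  by rewrite (crr q.2 b GB) big_map exchange_big.
rewrite eT /dia; apply: eq_bigr => q _; symmetry.
rewrite (lin_sum _ _ (rL q.2)) (lin_sum _ _ (mL q.1)).
rewrite (eq_bigr (fun r => \sum_(d <- Delta q.2)
   mul (mul (ract (ract a r.2) d.1) (ract r.1 d.2)) q.1)); last first.
  by move=> r _; rewrite rD (lin_sum _ _ (mL q.1)).
rewrite exchange_big /=; apply: eq_bigr => d _.
rewrite /T; apply: eq_bigr => x _.
by rewrite -mulA rM.
Qed.

Lemma dia1l : left_id one dia.
Proof.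
move=> b; rewrite /dia -{2}(prE b); apply: eq_bigr => q _.
by rewrite rone (linZ _ _ (mL _)) mul1l.
Qed.

Lemma dia1r : right_id one dia.
Proof. by move=> a; rewrite /dia (pr1 (diaF a)) big_seq1 /= r1 mul1r. Qed.

Lemma dia_lD h a b :
  lact h (dia a b) = \sum_(d <- Delta h) dia (lact d.1 a) (lact d.2 b).
Proof.
rewrite /dia (lin_sum _ _ (lR h)).
under eq_bigr do rewrite lD.
rewrite exchange_big /=; apply: eq_bigr => d _.
rewrite (crl d.2 b (diaF (lact d.1 a))) big_map; apply: eq_bigr => q _ /=.
by rewrite lr.
Qed.

Lemma dia_plM a b : teq2 (psil (dia a b))
  [seq (p.1 * q.1, dia p.2 q.2) | p <- psil a, q <- psil b].
Proof.
move=> M f fB; rewrite big_allpairs_dep /=.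
have PhiL := teq_lin plL fB.
have := lin_sum (psir b) (fun q => mul (ract a q.2) q.1) PhiL.
rewrite /= => ->.
pose T g m h := \sum_(x <- psil a) f (x.1 * g) (mul (ract x.2 h) m).
have TT : trilinear3 T.
  apply: tril_intro => [m h|g h|g m].
  - apply: lin_sumf => x; exact: (lin_comp (bilL _ fB) (mulHR x.1)).
  - apply: lin_sumf => x; exact: (lin_comp (bilR _ fB) (mR _)).
  - apply: lin_sumf => x.
    exact: (lin_comp (bilR _ fB) (lin_comp (mL m) (rR x.2))).
have := bic b TT; rewrite !big_allpairs_dep /= => eT.
transitivity (\sum_(q <- psir b) \sum_(y <- psil q.1) T y.1 y.2 q.2).
  apply: eq_bigr => q _.
  rewrite (plM (ract a q.2) q.1 fB) big_allpairs_dep /=.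
  pose G h m := \sum_(y <- psil q.1) f (h * y.1) (mul m y.2).
  have GB : bilinear2 G.
    apply: bil_intro => [m|h].
      apply: lin_sumf => y; exact: (lin_comp (bilL _ fB) (mulHL y.1)).
    apply: lin_sumf => y; exact: (lin_comp (bilR _ fB) (mL _)).
  by rewrite (clr q.2 a GB) big_map exchange_big.
rewrite eT exchange_big; apply: eq_bigr => y _.
rewrite exchange_big; apply: eq_bigr => x _.
by rewrite /dia (lin_sum _ _ (bilR _ fB)).
Qed.

Lemma dia_ltw a b : ltw_prod dia lact psil a b = lrtw_prod mul lact ract psil psir a b.
Proof.
rewrite /ltw_prod /lrtw_prod; apply: eq_bigr => p _.
by rewrite /dia (crl p.1 b (diaF p.2)) big_map.
Qed.

Lemma main_lemma :
  (right_twisting_datum Delta eps star one ract psir /\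
   forall a b, rtw_prod star ract psir a b = lrtw_prod mul lact ract psil psir a b) /\
  (left_twisting_datum Delta eps dia one lact psil /\
   forall a b, ltw_prod dia lact psil a b = lrtw_prod mul lact ract psil psir a b).
Proof.
split; split.
- split; first by split; [exact: starB | split; [exact: star_assoc | split; [exact: star1l | exact: star1r]]].
  split; first by split; [exact: rB | split; [exact: rM | split; [exact: r1 | split; [exact: star_rD | exact: rone]]]].
  split; last exact: crr.
  by split; [exact: prL | split; [exact: prC | split; [exact: prE | split; [exact: star_prM | exact: pr1]]]].
- exact: star_rtw.
- split; first by split; [exact: diaB | split; [exact: dia_assoc | split; [exact: dia1l | exact: dia1r]]].
  split; first by split; [exact: lB | split; [exact: lM | split; [exact: l1 | split; [exact: dia_lD | exact: lone]]]].
  split; last exact: cll.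
  by split; [exact: plL | split; [exact: plC | split; [exact: plE | split; [exact: dia_plM | exact: pl1]]]].
- exact: dia_ltw.
Qed.

End Main.

Theorem proposition4p5 (k : fieldType) (H : algType k)
  (Delta : H -> seq (H * H)) (eps : H -> k)
  (A : lmodType k) (mul : A -> A -> A) (one : A)
  (lact : H -> A -> A) (ract : A -> H -> A)
  (psil : A -> seq (H * A)) (psir : A -> seq (A * H)) :
  is_bialgebra Delta eps ->
  LR_twisting_datum Delta eps mul one lact ract psil psir ->
  (right_twisting_datum Delta eps (ltw_prod mul lact psil) one ract psir /\
   forall a b, rtw_prod (ltw_prod mul lact psil) ract psir a b
               = lrtw_prod mul lact ract psil psir a b) /\
  (left_twisting_datum Delta eps (rtw_prod mul ract psir) one lact psil /\
   forall a b, ltw_prod (rtw_prod mul ract psir) lact psil a b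
               = lrtw_prod mul lact ract psil psir a b).
Proof.
move=> _ [[mulB [mulA [mul1l mul1r]]] [[lB [lM [l1 [lD lone]]]]
  [[rB [rM [r1 [rD rone]]]] [lr [[plL [plC [plE [plM pl1]]]]
  [[prL [prC [prE [prM pr1]]]] [bic [cll [crl [clr crr]]]]]]]]]].
by apply: main_lemma.
Qed.
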